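(* If $G$ is a connected graph of order at least two and $t\ge 2$, then $O_{\rm SR}(G\diamond K_t)=\mathcal{B}$.
   Context: All graphs are finite, simple and undirected; $\overline{X}$ denotes the complement of $X$. The modular product $G\diamond H$ has vertex set $V(G)\times V(H)$, and $(g,h)$, $(g',h')$ are adjacent iff one of the following holds: ($g=g'$ and $hh'\in E(H)$), or ($h=h'$ and $gg'\in E(G)$), or ($gg'\in E(G)$ and $hh'\in E(H)$), or ($gg'\in E(\overline{G})$ and $hh'\in E(\overline{H})$). A set $S\subseteq V(X)$ is a strong resolving set of a connected graph $X$ if for all distinct $x,y\in V(X)$ there exists $z\in S$ such that $x$ lies on a $y$–$z$ geodesic or $y$ lies on an $x$–$z$ geodesic. The Maker–Breaker strong resolving game on $X$: Maker and Breaker alternately select a not-yet-chosen vertex of $X$; Maker wins if the vertices he selects contain a strong resolving set of $X$, Breaker wins otherwise. In the M-game Maker moves first, in the B-game Breaker moves first. $O_{\rm SR}(X)=\mathcal{M}$ if Maker has a winning strategy in both games, $\mathcal{B}$ if Breaker has a winning strategy in both, and $\mathcal{N}$ if the first player has a winning strategy in each. *)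

(* Defs.v *)
From mathcomp Require Import all_boot.
Set Implicit Arguments. Unset Strict Implicit. Unset Printing Implicit Defensive.

Definition simple_graph (T : finType) (e : rel T) : Prop :=
  symmetric e /\ irreflexive e.

Definition connected_graph (T : finType) (e : rel T) : Prop :=
  forall x y : T, connect e x y.

Definition Kt (t : nat) : rel 'I_t := fun i j => i != j.

Definition modprod (A B : finType) (eG : rel A) (eH : rel B) : rel (A * B) :=
  fun x y =>
    [|| (x.1 == y.1) && eH x.2 y.2,
        (x.2 == y.2) && eG x.1 y.1,
        eG x.1 y.1 && eH x.2 y.2
      | [&& x.1 != y.1, ~~ eG x.1 y.1, x.2 != y.2 & ~~ eH x.2 y.2]].

Definition on_geodesic (T : finType) (e : rel T) (y z x : T) : Prop :=
  exists p : seq T,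
    [/\ path e y p, last y p = z,
        (forall q : seq T, path e y q -> last y q = z -> size p <= size q)
      & x \in y :: p].

Definition strong_resolving (T : finType) (e : rel T) (S : {set T}) : Prop :=
  forall x y : T, x != y ->
    exists2 z, z \in S & (on_geodesic e y z x \/ on_geodesic e x z y).

Definition maker_goal (T : finType) (e : rel T) (M : {set T}) : Prop :=
  exists2 S : {set T}, S \subset M & strong_resolving e S.

(* Maker-Breaker game positions: M = Maker's vertices, B = Breaker's vertices,
   the bool is true iff it is Maker's turn.  The game ends when every vertex
   has been chosen. *)
Inductive MakerWins (T : finType) (e : rel T) : {set T} -> {set T} -> bool -> Prop :=
| MW_end M B b :
    (forall v, v \in M :|: B) -> maker_goal e M -> MakerWins e M B b
| MW_maker M B v :
    v \notin M :|: B -> MakerWins e (v |: M) B false -> MakerWins e M B true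
| MW_breaker M B :
    (exists v, v \notin M :|: B) ->
    (forall v, v \notin M :|: B -> MakerWins e M (v |: B) true) ->
    MakerWins e M B false.

Inductive BreakerWins (T : finType) (e : rel T) : {set T} -> {set T} -> bool -> Prop :=
| BW_end M B b :
    (forall v, v \in M :|: B) -> ~ maker_goal e M -> BreakerWins e M B b
| BW_maker M B :
    (exists v, v \notin M :|: B) ->
    (forall v, v \notin M :|: B -> BreakerWins e (v |: M) B false) ->
    BreakerWins e M B true
| BW_breaker M B v :
    v \notin M :|: B -> BreakerWins e M (v |: B) true -> BreakerWins e M B false.

(* Outcomes: M-game = Maker starts (true), B-game = Breaker starts (false). *)
Inductive outcome := OutM | OutB | OutN.

Definition outcome_is (T : finType) (e : rel T) (o : outcome) : Prop :=
  match o with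
  | OutM => MakerWins e set0 set0 true /\ MakerWins e set0 set0 false
  | OutB => BreakerWins e set0 set0 true /\ BreakerWins e set0 set0 false
  | OutN => MakerWins e set0 set0 true /\ BreakerWins e set0 set0 false
  end.

(* Main.v *)
Require Import Defs.
From mathcomp Require Import all_boot.
From mathcomp Require Import zify.
Set Implicit Arguments. Unset Strict Implicit. Unset Printing Implicit Defensive.

Lemma twin_not_geo (U : finType) (R : rel U) x y z :
  x != y -> z != x -> (forall h, R x h -> h = y \/ R y h) ->
  ~ on_geodesic R y z x.
Proof.
move=> nxy nzx Htw [p [Hp Hl Hmin Hx]].
have xp : x \in p by move: Hx; rewrite in_cons (negbTE nxy).
case/splitPr: xp Hp Hl Hmin => p1 p2.
rewrite cat_path last_cat /= => /andP[_ /andP[_ Hp2]] Hl Hmin.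
case: p2 Hp2 Hl Hmin => [|h p2] /=.
  by move=> _ Hxz; rewrite Hxz eqxx in nzx.
move=> /andP[Rxh Hp2] Hl Hmin.
case: (Htw h Rxh) => [Ehy|Ryh].
  subst h; have := Hmin p2 Hp2 Hl; rewrite size_cat /=; lia.
have := Hmin (h :: p2); rewrite /= Ryh Hp2 => /(_ isT Hl).
rewrite size_cat /=; lia.
Qed.

Lemma diam_not_geo (U : finType) (R : rel U) x y z :
  x != y -> z != x ->
  (exists q, [/\ path R y q, last y q = z &
     forall r, path R y r -> last y r = x -> size q <= size r]) ->
  ~ on_geodesic R y z x.
Proof.
move=> nxy nzx [q [Hq Hlq Hqm]] [p [Hp Hl Hmin Hx]].
have xp : x \in p by move: Hx; rewrite in_cons (negbTE nxy).
case/splitPr: xp Hp Hl Hmin => p1 p2.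
rewrite cat_path last_cat /= => /andP[Hp1 /andP[Rx Hp2]] Hl Hmin.
case: p2 Hp2 Hl Hmin => [|h p2] /=.
  by move=> _ Hxz; rewrite Hxz eqxx in nzx.
move=> _ _ Hmin.
have := Hqm (rcons p1 x); rewrite rcons_path Hp1 Rx last_rcons => /(_ isT erefl).
have := Hmin q Hq Hlq.
rewrite size_rcons size_cat /=; lia.
Qed.

Lemma modP (T : finType) (e : rel T) t (He : simple_graph e) a i c k :
  modprod e (@Kt t) (a, i) (c, k) = if a == c then i != k else e a c.
Proof.
case: He => Hs Hi; rewrite /modprod /Kt /=.
have [<-|nac] := eqVneq a c.
  by rewrite Hi /=; case: (i != k); rewrite ?andbF ?orbF.
by case: (e a c); case: (i == k).
Qed.

Section G.
Variables (T : finType) (e : rel T) (He : simple_graph e) (Hc : connected_graph e).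

Definition pathn u v n := [exists s : n.-tuple T, path e u s && (last u s == v)].

Lemma pathn_ex u v : exists n, pathn u v n.
Proof.
have /connectP [p Hp Hl] := Hc u v.
exists (size p); apply/existsP; exists (in_tuple p); by rewrite /= Hp Hl eqxx.
Qed.

Definition dG u v := ex_minn (pathn_ex u v).

Lemma dG_path u v : exists s, [/\ path e u s, last u s = v & size s = dG u v].
Proof.
rewrite /dG; case: ex_minnP => n /existsP [s /andP [Hs /eqP Hl]] _.
by exists s; rewrite size_tuple.
Qed.

Lemma dG_min u v s : path e u s -> last u s = v -> dG u v <= size s.
Proof.
move=> Hs Hl; rewrite /dG; case: ex_minnP => n _; apply.
apply/existsP; exists (in_tuple s); by rewrite /= Hs Hl eqxx.
Qed.

Lemma dG0 u v : dG u v = 0 -> u = v.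
Proof.
move=> H0; have [s [_ Hl Hs]] := dG_path u v.
by rewrite H0 in Hs; move/size0nil: Hs Hl => ->.
Qed.

Lemma dG_sym u v : dG u v <= dG v u.
Proof.
case: (dG_path v u) => s [Hs Hl Hsz]; rewrite -Hsz.
case: He => Hsym _.
have Hr : path e (last v s) (rev (belast v s)).
  rewrite rev_path; apply: sub_path Hs => x y; by rewrite Hsym.
rewrite Hl in Hr.
have := dG_min Hr; rewrite size_rev size_belast; apply.
case: s Hs Hl {Hsz Hr} => [|h s] /= _ Hl; first by rewrite Hl.
by rewrite rev_cons last_rcons.
Qed.

Lemma lift_path t (s : seq T) b (j k : 'I_t) :
  path e b s -> path (modprod e (@Kt t)) (b, j) [seq (v, k) | v <- s].
Proof.
elim: s b j => //= h s IH b j /andP [ebh Hs].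
have nbh : b != h by apply: contraTneq ebh => ->; case: He => _ ->.
by rewrite modP // (negbTE nbh) ebh IH.
Qed.

Lemma proj_path t (r : seq (T * 'I_t)) b j :
  path (modprod e (@Kt t)) (b, j) r ->
  exists s, [/\ path e b s, last b s = (last (b, j) r).1 & size s <= size r].
Proof.
elim: r b j => [|[c k] r IH] b j /=; first by exists [::].
move=> /andP [H1 Hr]; have [s [Hs Hl Hsz]] := IH c k Hr.
rewrite modP // in H1; have [Ebc|nbc] := eqVneq b c.
  by subst c; exists s; split=> //; apply: leqW.
by rewrite (negbTE nbc) in H1; exists (c :: s); rewrite /= H1 Hs Hl.
Qed.

Lemma diam_cond t (u w : T) (j i : 'I_t) : u != w ->
  (forall c, dG u c <= dG u w) -> forall z,
  exists q, [/\ path (modprod e (@Kt t)) (u, j) q, last (u, j) q = z &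
     forall r, path (modprod e (@Kt t)) (u, j) r -> last (u, j) r = (w, i) ->
       size q <= size r].
Proof.
move=> nuw Hmax [c k].
suff [q [Hq Hl Hsz]] : exists q, [/\ path (modprod e (@Kt t)) (u, j) q,
    last (u, j) q = (c, k) & size q <= dG u w].
  exists q; split=> // r Hr Hlr.
  have [s [Hs Hls Hsz2]] := proj_path Hr.
  rewrite Hlr /= in Hls.
  exact: leq_trans Hsz (leq_trans (dG_min Hs Hls) Hsz2).
have [Euc|nuc] := eqVneq u c.
  subst c; have [Ejk|njk] := eqVneq j k.
    by subst k; exists [::].
  exists [:: (u, k)]; rewrite /= modP // eqxx njk; split=> //.
  by case E: (dG u w) => //; move/dG0: E => E; rewrite E eqxx in nuw.
have [s [Hs Hl Hsz]] := dG_path u c.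
exists [seq (v, k) | v <- s]; split.
- exact: lift_path.
- case: s Hs Hl Hsz => [|h s] /= _ Hl _; first by rewrite Hl eqxx in nuc.
  by rewrite (last_map (fun v => (v, k))) Hl.
- by rewrite size_map Hsz.
Qed.

End G.

Definition bad (U : finType) (R : rel U) x y :=
  forall z, z != x -> ~ on_geodesic R y z x.

Lemma card_lt_notin (U : finType) (A : {set U}) v : v \notin A -> #|A| < #|U|.
Proof.
move=> Hv; rewrite -cardsT; apply: proper_card; rewrite properT.
by apply: contraNneq Hv => ->; rewrite inE.
Qed.

Lemma cardU1_le (U : finType) (A : {set U}) a : #|a |: A| <= #|A|.+1.
Proof. by rewrite cardsU1; case: (a \notin A). Qed.

Lemma L1 (U : finType) (R : rel U) x y : x != y -> bad R x y -> bad R y x ->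
  forall n M B b, #|U| <= n + #|M :|: B| -> x \in B -> y \in B ->
  x \notin M -> y \notin M -> BreakerWins R M B b.
Proof.
move=> nxy bxy byx; elim=> [|n IH] M B b Hn xB yB xM yM.
  case: (boolP [forall v, v \in M :|: B]) => [/forallP Hall|/forallPn [v Hv]].
    apply: BW_end => // [[S HS Hsr]].
    have [z zS Hz] := Hsr x y nxy.
    have zM : z \in M by apply: (subsetP HS).
    have zx : z != x by apply/eqP => E; rewrite -E zM in xM.
    have zy : z != y by apply/eqP => E; rewrite -E zM in yM.
    by case: Hz => H; [apply: (bxy z zx) | apply: (byx z zy)].
  have := card_lt_notin Hv; lia.
case: (boolP [forall v, v \in M :|: B]) => [/forallP Hall|/forallPn [v Hv]].
  apply: BW_end => // [[S HS Hsr]].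
  have [z zS Hz] := Hsr x y nxy.
  have zM : z \in M by apply: (subsetP HS).
  have zx : z != x by apply/eqP => E; rewrite -E zM in xM.
  have zy : z != y by apply/eqP => E; rewrite -E zM in yM.
  by case: Hz => H; [apply: (bxy z zx) | apply: (byx z zy)].
case: b.
  apply: BW_maker; first by exists v.
  move=> w Hw; apply: IH => //.
  - rewrite -setUA cardsU1 Hw; lia.
  - rewrite in_setU1 negb_or xM andbT; apply: contraNneq Hw => <-.
    by rewrite inE xB orbT.
  - rewrite in_setU1 negb_or yM andbT; apply: contraNneq Hw => <-.
    by rewrite inE yB orbT.
apply: (BW_breaker Hv); apply: IH => //.
- rewrite setUCA cardsU1 Hv; lia.
- by rewrite in_setU1 xB orbT.
- by rewrite in_setU1 yB orbT.
Qed.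

Lemma pick4 (U : finType) (V : {set U}) a b c : 4 <= #|V| ->
  exists2 w, w \in V & [&& w != a, w != b & w != c].
Proof.
move=> HV; case: (boolP (V \subset [set a; b; c])) => [Hs|/subsetPn [w wV wn]].
  have := subset_leq_card Hs.
  have := cardU1_le [set b; c] a; have := cardU1_le [set c] b.
  rewrite cards1 -setUA => h1 h2 h3; exfalso; lia.
exists w => //; move: wn; rewrite !inE !negb_or; case/andP => /andP [-> ->] ->. by [].
Qed.

Lemma games (U : finType) (R : rel U) (V : {set U}) : 4 <= #|V| ->
  (forall x y, x \in V -> y \in V -> x != y -> bad R x y) ->
  BreakerWins R set0 set0 true /\ BreakerWins R set0 set0 false.
Proof.
move=> HV Hbad; split.
  apply: BW_maker.
    have /card_gt0P [w _] : 0 < #|V| by lia.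
    by exists w; rewrite !inE.
  move=> m _.
  have [v vV /and3P [vm _ _]] := pick4 m m m HV.
  apply: (@BW_breaker _ _ _ _ v); first by rewrite !inE !orbF.
  apply: BW_maker.
    have [w _ /and3P [wm wv _]] := pick4 m v v HV.
    by exists w; rewrite !inE !orbF !negb_or wm wv.
  move=> m' Hm'.
  have [w wV /and3P [wm wv wm']] := pick4 m v m' HV.
  apply: (@BW_breaker _ _ _ _ w); first by rewrite !inE !orbF !negb_or wm wv wm'.
  move: Hm'; rewrite !inE !orbF !negb_or => /andP [m'm m'v].
  apply: (@L1 _ _ v w _ _ _ #|U|).
  - by rewrite eq_sym.
  - by apply: Hbad => //; rewrite eq_sym.
  - by apply: Hbad.
  - exact: leq_addr.
  - by rewrite !inE eqxx orbT.
  - by rewrite !inE eqxx.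
  - by rewrite !inE !orbF !negb_or eq_sym m'v vm.
  - by rewrite !inE !orbF !negb_or wm wm'.
have /card_gt0P [v1 v1V] : 0 < #|V| by lia.
apply: (@BW_breaker _ _ _ _ v1); first by rewrite !inE.
apply: BW_maker.
  have [w _ /and3P [wv _ _]] := pick4 v1 v1 v1 HV.
  by exists w; rewrite !inE !orbF.
move=> m Hm.
move: (Hm); rewrite !inE !orbF => mv1.
have [w wV /and3P [wv1 wm _]] := pick4 v1 m m HV.
apply: (@BW_breaker _ _ _ _ w); first by rewrite !inE !orbF !negb_or wv1 wm.
apply: (@L1 _ _ v1 w _ _ _ #|U|).
- by rewrite eq_sym.
- by apply: Hbad => //; rewrite eq_sym.
- by apply: Hbad.
- exact: leq_addr.
- by rewrite !inE eqxx orbT.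
- by rewrite !inE eqxx.
- by rewrite !inE !orbF eq_sym.
- by rewrite !inE !orbF.
Qed.

Theorem mainTheorem16 (T : finType) (e : rel T) (t : nat) :
  simple_graph e -> connected_graph e -> 2 <= #|T| -> 2 <= t ->
  outcome_is (modprod e (@Kt t)) OutB.
Proof.
move=> He Hc HT Ht.
have [u [v [_ _ nuv]]] := card_gt1P HT.
pose F := fun p : T * T => dG Hc p.1 p.2.
have [[a b] _ Hmax] := @arg_maxnP _ (u, u) xpredT F isT.
have Hm : forall c d, dG Hc c d <= dG Hc a b by move=> c d; exact: (Hmax (c, d)).
have nab : a != b.
  apply/eqP => Eab; subst b.
  have := Hm u v; have := @dG_min _ _ Hc a a [::] isT erefl.
  move=> h1 h2; rewrite /= in h1; have : dG Hc u v = 0 by lia.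
  by move/dG0 => E; rewrite E eqxx in nuv.
have Hma : forall d, dG Hc a d <= dG Hc a b by move=> d; apply: Hm.
have Hmb : forall d, dG Hc b d <= dG Hc b a.
  by move=> d; apply: leq_trans (Hm b d) (dG_sym He Hc a b).
have t0 : 0 < t by lia.
have t1 : 1 < t by lia.
pose i0 : 'I_t := Ordinal t0.
pose i1 : 'I_t := Ordinal t1.
have ni : i0 != i1 by [].
pose V := (a, i0) |: ((a, i1) |: ((b, i0) |: [set (b, i1)])).
apply: (@games _ _ V).
  rewrite !cardsU1 cards1 !inE !xpair_eqE !eqxx /= (eq_sym i1 i0); by move: nab ni; rewrite eq_sym; case: (b == a); case: (i0 == i1).
have HV : forall x, x \in V -> x.1 = a \/ x.1 = b.
  move=> x; rewrite !inE => /or4P [] /eqP -> /=; by [left|right].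
move=> [c k] [c' k'] /HV /= Hc1 /HV /= Hc2 nxy z nz.
have [Ecc|ncc] := eqVneq c c'.
  subst c'.
  have nkk : k != k' by apply: contraNneq nxy => ->.
  apply: (twin_not_geo nxy nz) => [[d l]].
  rewrite !modP //; have [Ecd|ncd] := eqVneq c d.
    subst d; have [Elk|nlk] := eqVneq l k'; first by left; rewrite Elk.
    by right.
  by move=> h; right.
apply: (diam_not_geo nxy nz).
apply: (diam_cond He); first by rewrite eq_sym.
by case: Hc1 Hc2 ncc => -> [] ->; rewrite ?eqxx.
Qed.
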